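(* Let $p$ be a probability density on $\mathbb{R}^{d}$, let $z_1, z_2, \dots$ be i.i.d. samples from $p$, let $K$ be a probability density on $\mathbb{R}^{d}$ with $\mathbb{E}_{\xi\sim K}[\xi]=0$ and $\mathbb{E}_{\xi\sim K}[\xi\xi^\top]=I$, and let $(h_n)_{n\ge1}$ be a sequence of positive bandwidths. Let $\Theta$ be a parameter set and $\hat f_\theta:\mathbb{R}^{d}\to(0,\infty)$, $\theta\in\Theta$, a family of positive functions, with $(z,\theta)\mapsto \hat f_\theta(z)$ continuous. Define $$\hat q_n^{(h_n)}(z)=\frac{1}{n}\sum_{i=1}^n \frac{1}{h_n^{d}}K\!\left(\frac{z-z_i}{h_n}\right),\quad l(\theta)=-\int \log\hat f_\theta(z)\,p(z)\,dz,\quad l_n^{(h_n)}(\theta)=-\int \log\hat f_\theta(z)\,\hat q_n^{(h_n)}(z)\,dz.$$ Suppose that for some $\epsilon>0$ there is a constant $B_p^{(\epsilon)}$ with $$\int |\log \hat f_\theta(z)|^{1+\epsilon}\,p(z)\,dz\le B_p^{(\epsilon)}<\infty\quad\text{for all }\theta\in\Theta,$$ and that there is an $n_0$ such that for all $n>n_0$ there is a constant $B_{\hat q}^{(\epsilon)}$ with $$\int |\log \hat f_\theta(z)|^{1+\epsilon}\,\hat q_n^{(h_n)}(z)\,dz\le B_{\hat q}^{(\epsilon)}<\infty\quad\text{for all }\theta\in\Theta,$$ almost surely. Then there is a constant $C_\epsilon$ such that, with probability $1$, for all $n>n_0$, $$\sup_{\theta\in\Theta}\left|l_n^{(h_n)}(\theta)-l(\theta)\right|\le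 C_\epsilon\left(\int\left|\hat q_n^{(h_n)}(z)-p(z)\right|dz\right)^{\frac{\epsilon}{1+\epsilon}}.$$
   Context: This is the setting of maximum likelihood estimation with additive data noise (noise regularization). The data points $z_i\in\mathbb{R}^{d}$, sampled i.i.d. from the unknown true density $p$, are perturbed by independent noise vectors drawn from $K$ and scaled by the bandwidth $h_n$. Drawing a data point uniformly at random and adding $h_n\xi$ with $\xi\sim K$ is the same as sampling from the kernel density estimate $\hat q_n^{(h_n)}$. The quantity $l(\theta)$ is the idealized negative expected log-likelihood under $p$. The quantity $l_n^{(h_n)}(\theta)$ is the negative expected log-likelihood under the kernel density estimate; it is a random quantity because it depends on $z_1,\dots,z_n$. *)

(* Defs.v *)
From HB Require Import structures.
From mathcomp Require Import all_boot all_order all_algebra.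
From mathcomp Require Import all_classical all_reals all_analysis.
Set Implicit Arguments. Unset Strict Implicit. Unset Printing Implicit Defensive.
Import Order.TTheory GRing.Theory Num.Theory.
Import numFieldNormedType.Exports.
Local Open Scope classical_set_scope.
Local Open Scope ring_scope.

(* R^d is represented by d.-tuple R, equipped with its product (Borel)
   sigma-algebra from measurable_structure.v. *)

(* Lebesgue measure on R^d, characterized by its value on closed boxes
   (boxes form a pi-system generating the sigma-algebra, so this determines
   the measure uniquely). *)
Definition is_lebesgue_measure (R : realType) (d : nat)
  (leb : set (d.-tuple R) -> \bar R) : Prop :=
  forall a b : d.-tuple R, (forall i, tnth a i <= tnth b i) ->
    leb [set x | forall i, tnth a i <= tnth x i <= tnth b i]
    = (\prod_(i < d) (tnth b i - tnth a i))%:E.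

Definition is_density (R : realType) (d : nat)
  (leb : {measure set (d.-tuple R) -> \bar R}) (f : d.-tuple R -> R) : Prop :=
  measurable_fun [set: d.-tuple R] f /\ (forall x, 0 <= f x) /\
  (\int[leb]_x (f x)%:E = 1)%E.

(* Euclidean topology on tuples, transported from row vectors *)
Definition tuple_of_row (R : realType) (d : nat) (v : 'rV[R]_d) : d.-tuple R :=
  [tuple v ord0 i | i < d].

Definition tshift_scale (R : realType) (d : nat) (z zi : d.-tuple R) (h : R)
  : d.-tuple R := [tuple (tnth z i - tnth zi i) / h | i < d].

(* kernel density estimate  q_n^(h_n)(z) built from Z 0, ..., Z (n-1) *)
Definition kde (R : realType) (d : nat) (Omega : Type)
  (K : d.-tuple R -> R) (Z : nat -> Omega -> d.-tuple R) (h : nat -> R)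
  (n : nat) (w : Omega) (z : d.-tuple R) : R :=
  (n%:R)^-1 * \sum_(i < n) ((h n ^+ d)^-1 * K (tshift_scale z (Z i w) (h n))).

Definition mutually_independent (R : realType) (dO : measure_display)
  (Omega : measurableType dO) (P : probability Omega R) (d : nat)
  (Z : nat -> Omega -> d.-tuple R) : Prop :=
  forall (s : seq nat) (A : nat -> set (d.-tuple R)), uniq s ->
    (forall i, measurable (A i)) ->
    P (\bigcap_(i in [set j | j \in s]) (Z i @^-1` A i))
    = (\prod_(i <- s) fine (P (Z i @^-1` A i)))%:E.

Definition neg_loglik (R : realType) (d : nat)
  (leb : {measure set (d.-tuple R) -> \bar R})
  (f : d.-tuple R -> R) (q : d.-tuple R -> R) : \bar R :=
  (- \int[leb]_z (ln (f z) * q z)%:E)%E.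

(* Main.v *)
Require Import Defs.
From HB Require Import structures.
From mathcomp Require Import all_boot all_order all_algebra.
From mathcomp Require Import all_classical all_reals all_analysis measurable_realfun.
From mathcomp Require Import ring lra.
Import Order.TTheory GRing.Theory Num.Theory.
Import numFieldNormedType.Exports.
Local Open Scope classical_set_scope.
Local Open Scope ring_scope.
Section reals.
Variable R : realType.

Lemma pw_young (y M e : R) : 0 <= y -> 0 < M -> 0 < e ->
  y <= M + y `^ (1 + e) / M `^ e.
Proof.
move=> y0 M0 e0.
have [yM|My] := leP y M.
  by apply: (le_trans yM); rewrite lerDl divr_ge0 // powR_ge0.
have yn0 : y != 0 by rewrite gt_eqF // (lt_trans M0 My).
rewrite powRD; last by rewrite yn0 implybT.
rewrite powRr1 // -mulrA.
apply: ler_wpDl; first exact: ltW.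
rewrite ler_peMr //.
rewrite ler_pdivlMr ?powR_gt0 // mul1r.
apply: ge0_ler_powR; rewrite ?ltW //.
  by rewrite nnegrE ltW.
Qed.

Lemma real_opt (X D B e : R) : 0 <= D -> 0 <= B -> 0 < e ->
  (forall M, 0 < M -> X <= M * D + B / (M `^ e)) ->
  X <= (1 + B) * D `^ (e / (1 + e)).
Proof.
move=> D0 B0 e0 H.
have e1 : 0 < 1 + e by rewrite addr_gt0.
have [D00|Dp] := eqVneq D 0.
  subst D.
  rewrite powR0 ?mulr0; last by rewrite mulf_neq0 ?gt_eqF ?invr_gt0.
  rewrite leNgt; apply/negP => X0.
  pose M := ((B + 1) / X) `^ (e^-1).
  have BX : 0 < (B + 1) / X by rewrite divr_gt0 // ltr_wpDl.
  have M0 : 0 < M by rewrite powR_gt0.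
  move: (H M M0); rewrite mulr0 add0r.
  rewrite /M -powRrM mulVf ?gt_eqF // (powRr1 (ltW BX)).
  have B1 : 0 < B + 1 by rewrite ltr_wpDl.
  rewrite invf_div mulrA ler_pdivlMr // => HX.
  have : X * (B + 1) <= B * X by [].
  by rewrite mulrDr mulr1 mulrC -subr_ge0 opprD addrA subrr sub0r oppr_ge0 leNgt X0.
have D0' : 0 < D by rewrite lt0r Dp.
pose M := D `^ (- (1 + e)^-1).
have M0 : 0 < M by rewrite powR_gt0.
apply: (le_trans (H M M0)).
have E1 : M * D = D `^ (e / (1 + e)).
  rewrite /M -{2}(powRr1 D0) -powRD; last by rewrite Dp implybT.
  congr (D `^ _); rewrite -[X in _ + X](divff (lt0r_neq0 e1)).
  by field; rewrite lt0r_neq0.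
have E2 : M `^ e = (D `^ (e / (1 + e)))^-1.
  by rewrite /M -powRrM -powRN mulNr mulrC.
rewrite E1 E2 invrK mulrDl mul1r //=.
Qed.
End reals.
Section tuples.
Variable R : realType.
Variable d : nat.

Definition row_of_tuple (z : d.-tuple R) : 'rV[R]_d := \row_i tnth z i.

Lemma tuple_of_rowK (z : d.-tuple R) : tuple_of_row (row_of_tuple z) = z.
Proof.
by apply: eq_from_tnth => i; rewrite /tuple_of_row tnth_mktuple mxE.
Qed.

Definition box (ab : d.-tuple rat * d.-tuple rat) : set (d.-tuple R) :=
  [set z | forall i, ratr (tnth ab.1 i) < tnth z i < ratr (tnth ab.2 i)].

Lemma measurable_box ab : measurable (box ab).
Proof.
have -> : box ab = \bigcap_(i in [set: 'I_d])
   ([set: d.-tuple R] `&` (fun z => tnth z i) @^-1`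
      `]ratr (tnth ab.1 i), ratr (tnth ab.2 i)[).
  apply/seteqP; split => z /=.
    by move=> H i _; split => //=; rewrite in_itv /= H.
  by move=> H i; have [_ /=] := H i I; rewrite in_itv.
apply: fin_bigcap_measurable; first exact: finite_finset.
by move=> i _; apply: measurable_tnth => //; exact: measurable_itv.
Qed.

Lemma open_tuple_meas (O : set 'rV[R]_d) : open O ->
  measurable [set z : d.-tuple R | O (row_of_tuple z)].
Proof.
move=> oO.
set S := [set z : d.-tuple R | O (row_of_tuple z)].
pose F n := if @unpickle (d.-tuple rat * d.-tuple rat)%type n is Some ab then
   (if pselect (box ab `<=` S) then box ab else set0) else set0.
have -> : S = \bigcup_n F n.
  apply/seteqP; split => z; last first.
    move=> [n _]; rewrite /F; case: (unpickle n) => [ab|//].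
    by case: pselect => // H /H.
  move=> Sz.
  have := oO _ Sz; rewrite /interior => /nbhs_ballP[e e0 be].
  have Hi : forall i : 'I_d, exists ab : rat * rat,
     tnth z i - e < ratr ab.1 < tnth z i /\ tnth z i < ratr ab.2 < tnth z i + e.
    move=> i.
    have l1 : tnth z i - e < tnth z i by rewrite ltrBlDr ltrDl.
    have l2 : tnth z i < tnth z i + e by rewrite ltrDl.
    have [q1] := rat_in_itvoo l1.
    have [q2] := rat_in_itvoo l2.
    rewrite !in_itv /= => H2 H1.
    by exists (q1, q2); rewrite H1 H2.
  have [g Hg] := boolp.choice Hi.
  pose ab := ([tuple (g i).1 | i < d], [tuple (g i).2 | i < d]).
  have Bz : box ab z.
    move=> i; rewrite /ab /= !tnth_mktuple.
    by have [/andP[_ ->] /andP[-> _]] := Hg i.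
  have BS : box ab `<=` S.
    move=> y By; apply: be; split => // i j; rewrite (ord1 i) /ball /= !mxE.
    have := By j; rewrite /ab /= !tnth_mktuple.
    have [/andP[h1 h2] /andP[h3 h4]] := Hg j.
    move=> /andP[h5 h6].
    rewrite ltr_norml; apply/andP; split; lra.
  exists (pickle ab); first by [].
  rewrite /F pickleK; by case: pselect.
apply: bigcupT_measurable => n; rewrite /F.
case: (unpickle n) => [ab|//]; case: ifPn => _ //.
exact: measurable_box.
Qed.

Lemma cont_tuple_meas (g : 'rV[R]_d -> R) : continuous g ->
  measurable_fun [set: d.-tuple R] (fun z => g (row_of_tuple z)).
Proof.
move=> /continuousP cg.
apply: (measurability _ (RGenOpens.measurableE R)).
move=> _ [_ [a [b ->]] <-].
rewrite setTI.
have := @open_tuple_meas _ (cg _ (@interval_open R _ _ _ _)).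
by move=> /(_ (BRight a) (BLeft b) isT isT).
Qed.

End tuples.
Arguments row_of_tuple {R d}.
Section key.
Context dT (T : measurableType dT) (R : realType)
  (mu : {measure set T -> \bar R}).

Let mE (f : T -> R) : measurable_fun setT f ->
  measurable_fun setT (fun x => (f x)%:E).
Proof. by move=> mf; apply/measurable_EFinP. Qed.

Let mabs (f : T -> R) : measurable_fun setT f ->
  measurable_fun setT (fun x => `|f x|).
Proof. by move=> mf; apply: measurableT_comp => //; exact: normr_measurable. Qed.

Let mpow (f : T -> R) r : measurable_fun setT f ->
  measurable_fun setT (fun x => f x `^ r).
Proof. by move=> mf; exact: (measurableT_comp (measurable_powR r) mf). Qed.

Let intg (f g : T -> R) : measurable_fun setT f -> measurable_fun setT g ->
  (forall x, `|f x| <= g x) -> (\int[mu]_x (g x)%:E < +oo)%E ->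
  mu.-integrable setT (fun x => (f x)%:E).
Proof.
move=> mf mg fg gfin.
apply: (@le_integrable _ _ _ _ _ _ _ (fun x => (g x)%:E)) => //.
- exact: mE.
- by move=> x _; rewrite !abse_EFin lee_fin (ger0_norm (le_trans (normr_ge0 _) (fg x))).
apply/integrableP; split; first exact: mE.
under eq_integral => x _ do rewrite abse_EFin (ger0_norm (le_trans (normr_ge0 _) (fg x))).
exact: gfin.
Qed.

Lemma key (a p q : T -> R) (e Bp Bq : R) :
  measurable_fun setT a -> measurable_fun setT p -> measurable_fun setT q ->
  (forall x, 0 <= p x) -> (forall x, 0 <= q x) -> 0 < e ->
  (\int[mu]_x (p x)%:E = 1)%E ->
  (\int[mu]_z ((`|a z| `^ (1 + e)) * p z)%:E <= Bp%:E)%E ->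
  (\int[mu]_z ((`|a z| `^ (1 + e)) * q z)%:E <= Bq%:E)%E ->
  (`| (- \int[mu]_z (a z * q z)%:E) - (- \int[mu]_z (a z * p z)%:E) |
     <= (1 + (`|Bp| + `|Bq|))%:E * (\int[mu]_z (`|q z - p z|)%:E)
          `^ (e / (1 + e)))%E.
Proof.
move=> ma mp mq p0 q0 e0 int_p HBp HBq.
set B := `|Bp| + `|Bq|.
have B0 : 0 <= B by rewrite addr_ge0.
have e1 : 0 < 1 + e by rewrite addr_gt0.
have r0 : 0 < e / (1 + e) by rewrite divr_gt0.
pose dl z := `|q z - p z|.
have dl0 : forall z, 0 <= dl z by move=> z; exact: normr_ge0.
have mdl : measurable_fun setT dl by apply: mabs; exact: measurable_funB.
have mA : measurable_fun setT (fun z => `|a z|) by exact: mabs.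
have mAe : measurable_fun setT (fun z => `|a z| `^ (1 + e)) by exact: mpow.
have I1 : (\int[mu]_z ((`|a z| `^ (1 + e)) * dl z)%:E <= B%:E)%E.
  apply: (@le_trans _ _ (\int[mu]_z ((`|a z| `^ (1 + e) * q z)%:E
                          + (`|a z| `^ (1 + e) * p z)%:E))%E).
    apply: ge0_le_integral => //.
    + by move=> z _; rewrite lee_fin mulr_ge0 ?powR_ge0 ?normr_ge0.
    + by apply: mE; apply: measurable_funM.
    + by apply: emeasurable_funD; apply: mE; apply: measurable_funM.
    + move=> z _; rewrite -EFinD lee_fin -mulrDr ler_wpM2l ?powR_ge0 //.
      by rewrite /dl (le_trans (ler_normB _ _)) // !ger0_norm.
  rewrite ge0_integralD //; last 4 first.
  - by move=> z _; rewrite lee_fin mulr_ge0 ?powR_ge0.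
  - by apply: mE; apply: measurable_funM.
  - by move=> z _; rewrite lee_fin mulr_ge0 ?powR_ge0.
  - by apply: mE; apply: measurable_funM.
  apply: (le_trans (leeD HBq HBp)).
  by rewrite -EFinD lee_fin addrC lerD // ler_norm.
have D0 : (0 <= \int[mu]_z (dl z)%:E)%E.
  by apply: integral_ge0 => z _; rewrite lee_fin normr_ge0.
have [Dinf|Dfin] := eqVneq (\int[mu]_z (dl z)%:E)%E +oo%E.
  have Dinf' : (\int[mu]_z (`|q z - p z|)%:E)%E = +oo%E by exact: Dinf.
  rewrite Dinf' poweRyr ?gt_eqF // muleC gt0_mulye ?leey //.
  by rewrite lte_fin ltr_wpDr.
have [D' DE] : exists D', (\int[mu]_z (dl z)%:E)%E = D'%:E.
  exists (fine (\int[mu]_z (dl z)%:E)%E); rewrite fineK //.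
  by rewrite ge0_fin_numE // ltey.
have D'0 : 0 <= D' by rewrite -lee_fin -DE.
have I2 : forall M, 0 < M ->
  (\int[mu]_z (`|a z| * dl z)%:E <= (M * D' + B / M `^ e)%:E)%E.
  move=> M M0.
  have Me0 : 0 < M `^ e by rewrite powR_gt0.
  apply: (@le_trans _ _ (\int[mu]_z ((M%:E * (dl z)%:E)
        + ((M `^ e)^-1%:E * ((`|a z| `^ (1 + e)) * dl z)%:E)))%E).
    apply: ge0_le_integral => //.
    + by move=> z _; rewrite lee_fin mulr_ge0 ?normr_ge0.
    + by apply: mE; apply: measurable_funM.
    + apply: emeasurable_funD; apply: emeasurable_funM => //;
        by apply: mE => //; apply: measurable_funM.
    + move=> z _; rewrite -!EFinM -EFinD lee_fin.
      have -> : M * dl z + (M `^ e)^-1 * (`|a z| `^ (1 + e) * dl z)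
          = (M + `|a z| `^ (1 + e) / M `^ e) * dl z by ring.
      by apply: ler_wpM2r; [exact: normr_ge0 | apply: pw_young].
  rewrite ge0_integralD //; last 4 first.
  - by move=> z _; rewrite -EFinM lee_fin mulr_ge0 ?dl0 ?ltW.
  - by apply: emeasurable_funM => //; apply: mE.
  - by move=> z _; rewrite -EFinM lee_fin mulr_ge0 ?invr_ge0 /dl ?mulr_ge0 ?powR_ge0 ?normr_ge0 ?ltW.
  - by apply: emeasurable_funM => //; apply: mE; apply: measurable_funM.
  rewrite ge0_integralZl //; last 3 first.
  - by apply: mE => //; try apply: measurable_funM.
  - by move=> z _; rewrite lee_fin ?mulr_ge0 ?powR_ge0 ?dl0.
  - by rewrite lee_fin ?invr_ge0 ?powR_ge0 ?ltW.
  rewrite ge0_integralZl //; last 3 first.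
  - by apply: mE => //; try apply: measurable_funM.
  - by move=> z _; rewrite lee_fin ?mulr_ge0 ?powR_ge0 ?dl0.
  - by rewrite lee_fin ?invr_ge0 ?powR_ge0 ?ltW.
  rewrite DE EFinD -EFinM leeD2l // mulrC EFinM.
  by apply: lee_wpmul2l => //; rewrite lee_fin invr_ge0 ltW.
have ip : mu.-integrable setT (fun z => (a z * p z)%:E).
  apply: (@intg _ (fun z => p z + `|a z| `^ (1 + e) * p z)).
  - exact: measurable_funM.
  - by apply: measurable_funD => //; apply: measurable_funM.
  - move=> z; rewrite normrM (ger0_norm (p0 z)) -[X in X + _]mul1r -mulrDl.
    apply: ler_wpM2r => //.
    by have := @pw_young _ _ _ _ (normr_ge0 (a z)) ltr01 e0; rewrite powR1 /= divr1.
  rewrite (_ : (fun x => _) = (fun x => (p x)%:E + (`|a x| `^ (1 + e) * p x)%:E)%E);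
    last by apply: funext => x; rewrite EFinD.
  rewrite ge0_integralD //; last 4 first.
  - by move=> z _; rewrite lee_fin.
  - exact: mE.
  - by move=> z _; rewrite lee_fin mulr_ge0 ?powR_ge0.
  - by apply: mE; apply: measurable_funM.
  rewrite int_p; apply: (le_lt_trans (leeD2l _ HBp)).
  by rewrite -EFinD ltry.
have I2' : (\int[mu]_z (`|a z| * dl z)%:E < +oo)%E.
  by apply: (le_lt_trans (I2 _ ltr01)); rewrite ltry.
have Ap : (\int[mu]_z (`|a z| * p z)%:E < +oo)%E.
  move/integrableP : ip => [_]; under eq_integral => x _ do
    rewrite abse_EFin normrM (ger0_norm (p0 x)).
  by [].
have iq : mu.-integrable setT (fun z => (a z * q z)%:E).
  apply: (@intg _ (fun z => `|a z| * dl z + `|a z| * p z)).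
  - exact: measurable_funM.
  - by apply: measurable_funD => //; apply: measurable_funM.
  - move=> z; rewrite normrM (ger0_norm (q0 z)) -mulrDr.
    apply: ler_wpM2l => //.
    by rewrite -lerBlDr /dl ler_norm.
  rewrite (_ : (fun x => _) = (fun x => (`|a x| * dl x)%:E + (`|a x| * p x)%:E)%E);
    last by apply: funext => x; rewrite EFinD.
  rewrite ge0_integralD //; last 4 first.
  - by move=> z _; rewrite lee_fin mulr_ge0 ?dl0.
  - by apply: mE; apply: measurable_funM.
  - by move=> z _; rewrite lee_fin mulr_ge0.
  - by apply: mE; apply: measurable_funM.
  by apply: lte_add_pinfty.
have -> : (- (\int[mu]_z (a z * q z)%:E) - - (\int[mu]_z (a z * p z)%:E)
   = \int[mu]_z ((a z * p z)%:E - (a z * q z)%:E))%E.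
  rewrite integralB_EFin // oppeK addeC //.
apply: (le_trans (le_abse_integral _ _ _)) => //.
  by apply: emeasurable_funB; apply: mE; apply: measurable_funM.
under eq_integral => x _ do
  rewrite -EFinB abse_EFin -mulrBr normrM distrC.
have [X XE] : exists X, (\int[mu]_z (`|a z| * dl z)%:E)%E = X%:E.
  exists (fine (\int[mu]_z (`|a z| * dl z)%:E)%E); rewrite fineK //.
  rewrite ge0_fin_numE // integral_ge0 // => z _.
  by rewrite lee_fin mulr_ge0 ?dl0.
rewrite /dl in XE; rewrite XE.
have DE' : (\int[mu]_z (`|q z - p z|)%:E)%E = D'%:E by exact: DE.
rewrite DE' poweR_EFin -EFinM lee_fin.
apply: real_opt => // M M0.
rewrite -lee_fin -XE.
exact: I2.
Qed.
End key.
Theorem lemma1 (R : realType) (d : nat)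
  (leb : {measure set (d.-tuple R) -> \bar R})
  (Hleb : is_lebesgue_measure leb)
  (p K : d.-tuple R -> R)
  (Hp : is_density leb p) (HK : is_density leb K)
  (HK1int : forall i : 'I_d, leb.-integrable setT (fun x => (tnth x i * K x)%:E))
  (HK1 : forall i : 'I_d, (\int[leb]_x (tnth x i * K x)%:E = 0)%E)
  (HK2int : forall i j : 'I_d,
     leb.-integrable setT (fun x => (tnth x i * tnth x j * K x)%:E))
  (HK2 : forall i j : 'I_d,
     (\int[leb]_x (tnth x i * tnth x j * K x)%:E = (i == j)%:R%:E)%E)
  (dO : measure_display) (Omega : measurableType dO) (P : probability Omega R)
  (Z : nat -> Omega -> d.-tuple R)
  (HZmeas : forall i, measurable_fun setT (Z i))
  (HZlaw : forall i (A : set (d.-tuple R)), measurable A ->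
     P (Z i @^-1` A) = (\int[leb]_(x in A) (p x)%:E)%E)
  (HZind : mutually_independent P Z)
  (h : nat -> R) (Hh : forall n, (0 < n)%N -> 0 < h n)
  (Theta : topologicalType) (f : Theta -> d.-tuple R -> R)
  (Hfpos : forall th z, 0 < f th z)
  (Hfcont : continuous (fun vt : 'rV[R]_d * Theta => f vt.2 (tuple_of_row vt.1)))
  (eps : R) (Heps : 0 < eps)
  (Bp : R)
  (HBp : forall th,
     (\int[leb]_z ((`|ln (f th z)| `^ (1 + eps)) * p z)%:E <= Bp%:E)%E)
  (n0 : nat) (Bq : R)
  (HBq : {ae P, forall w, forall n, (n0 < n)%N -> forall th,
     (\int[leb]_z ((`|ln (f th z)| `^ (1 + eps)) * kde K Z h n w z)%:E
        <= Bq%:E)%E}) :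
  exists C : R,
    {ae P, forall w, forall n, (n0 < n)%N -> forall th,
      (`| neg_loglik leb (f th) (kde K Z h n w) - neg_loglik leb (f th) p |
       <= C%:E * (\int[leb]_z (`| kde K Z h n w z - p z |)%:E)
                   `^ (eps / (1 + eps)))%E}.
Proof.
exists (1 + (`|Bp| + `|Bq|)).
apply: filterS HBq => w Hw n Hn th.
have npos : (0 < n)%N by apply: leq_ltn_trans Hn.
have hn0 := Hh n npos.
have mf : measurable_fun setT (f th).
  pose g := fun v : 'rV[R]_d => f th (tuple_of_row v).
  have cg : continuous g.
    move=> v; apply: (@continuous_comp _ _ _ (fun v : 'rV[R]_d => (v, th))
      (fun vt : 'rV[R]_d * Theta => f vt.2 (tuple_of_row vt.1))).
      move=> A /=; rewrite nbhs_simpl /=.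
      move=> [[A1 A2] /= [hA1 hA2] sA].
      apply: filterS hA1 => x A1x.
      exact: (sA (x, th) (conj A1x (nbhs_singleton hA2))).
    exact: Hfcont.
  rewrite (_ : f th = fun z => g (row_of_tuple z)).
    exact: cont_tuple_meas.
  by apply: funext => z; rewrite /g tuple_of_rowK.
have ma : measurable_fun setT (fun z => ln (f th z)).
  exact: (measurableT_comp (@measurable_ln R) mf).
have [mK [K0 _]] := HK.
have [mp [p0 intp]] := Hp.
have mq : measurable_fun setT (kde K Z h n w).
  rewrite /kde; apply: measurable_funM => //.
  apply: measurable_sum => i; apply: measurable_funM => //.
  apply: (measurableT_comp mK).
  apply/measurable_fun_tnthP => j.
  rewrite (_ : _ \o _ = fun z => (tnth z j - tnth (Z i w) j) / h n).
    apply: measurable_funM => //; apply: measurable_funB => //.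
    exact: measurable_tnth.
  by apply: funext => z /=; rewrite tnth_mktuple.
have q0 : forall z, 0 <= kde K Z h n w z.
  move=> z; rewrite /kde mulr_ge0 ?invr_ge0 ?ler0n //.
  apply: sumr_ge0 => i _; apply: mulr_ge0; last exact: K0.
  by rewrite invr_ge0 exprn_ge0 // ltW.
exact: (@key _ _ _ leb (fun z => ln (f th z)) p (kde K Z h n w) eps Bp Bq ma mp mq p0 q0 Heps intp (HBp th) (Hw n Hn th)).
Qed.
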